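(* Let $-2<k<2$ and $(x_0,y_0,z_0)\in E_k$. If the $\Gamma$-orbit of $(x_0,y_0,z_0)$ is infinite, then it is dense in $E_k$.
   Context: $M$ is a torus with one boundary component; $\pi_1(M)$ is free on $X,Y$, $K=XYX^{-1}Y^{-1}$. $E=\operatorname{Hom}(\pi_1(M),\mathrm{SU}(2))/\mathrm{SU}(2)$ is identified via $[\sigma]\mapsto(\operatorname{tr}\sigma(X),\operatorname{tr}\sigma(Y),\operatorname{tr}\sigma(XY))$ with $\{(x,y,z)\in[-2,2]^3:-2\le x^2+y^2+z^2-xyz-2\le2\}$, and $E_k=\{(x,y,z)\in E:x^2+y^2+z^2-xyz-2=k\}$, with the topology induced from $\mathbb{R}^3$. $\Gamma$ is the mapping class group of $M$ fixing $\partial M$; it acts on $E$ and is generated by $\tau_X(x,y,z)=(x,z,xz-y)$ and $\tau_Y(x,y,z)=(z,y,yz-x)$, which preserve each $E_k$. *)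

(* Defs.v *)
From Stdlib Require Import Reals List.
Open Scope R_scope.

Definition pt := (R * R * R)%type.

Definition kappa (p : pt) : R :=
  let '(x, y, z) := p in x * x + y * y + z * z - x * y * z - 2.

Definition in_cube (p : pt) : Prop :=
  let '(x, y, z) := p in
  -2 <= x <= 2 /\ -2 <= y <= 2 /\ -2 <= z <= 2.

Definition E (p : pt) : Prop := in_cube p /\ -2 <= kappa p <= 2.

Definition E_k (k : R) (p : pt) : Prop := E p /\ kappa p = k.

Definition tauX (p : pt) : pt := let '(x, y, z) := p in (x, z, x * z - y).
Definition tauY (p : pt) : pt := let '(x, y, z) := p in (z, y, y * z - x).
Definition tauX_inv (p : pt) : pt := let '(x, y, z) := p in (x, x * y - z, y).
Definition tauY_inv (p : pt) : pt := let '(x, y, z) := p in (y * x - z, y, x).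

(* The Gamma-orbit of p0: Gamma is generated by tauX, tauY, so the orbit is
   the smallest set containing p0 closed under the generators and their inverses. *)
Inductive orbit (p0 : pt) : pt -> Prop :=
| orbit_base : orbit p0 p0
| orbit_X : forall p, orbit p0 p -> orbit p0 (tauX p)
| orbit_Y : forall p, orbit p0 p -> orbit p0 (tauY p)
| orbit_Xi : forall p, orbit p0 p -> orbit p0 (tauX_inv p)
| orbit_Yi : forall p, orbit p0 p -> orbit p0 (tauY_inv p).

Definition finite_set (S : pt -> Prop) : Prop :=
  exists l : list pt, forall p, S p -> In p l.

Definition dist3 (p q : pt) : R :=
  let '(x, y, z) := p in let '(x', y', z') := q in
  sqrt ((x - x') ^ 2 + (y - y') ^ 2 + (z - z') ^ 2).

Definition dense_in (S T : pt -> Prop) : Prop :=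
  forall p, T p -> forall eps, eps > 0 -> exists q, S q /\ dist3 p q < eps.

(* Main.v *)
Require Import Defs.
From Stdlib Require Import Reals Lra Lia Psatz ZArith List Classical.
From Coquelicot Require Coquelicot.
Open Scope R_scope.

Definition xc (p : pt) : R := fst (fst p).
Definition yc (p : pt) : R := snd (fst p).
Definition zc (p : pt) : R := snd p.

Lemma kappa_bound u v w : -2 <= u <= 2 -> -2 <= v <= 2 ->
  u*u + v*v + w*w - u*v*w - 2 < 2 -> -2 < w < 2.
Proof.
  intros Hu Hv H.
  assert (Huv : u*v <= 4) by nra.
  assert (Huv' : -4 <= u*v) by nra.
  split.
  - destruct (Rlt_or_le (-2) w) as [|Hw]; auto.
    assert (u*u+v*v+w*w-u*v*w-2 - ((u+v)*(u+v)+2) = (-2 - w)*(2 + u*v - w)) by ring.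
    assert (0 <= (-2 - w)*(2 + u*v - w)) by (apply Rmult_le_pos; nra).
    pose proof (Rle_0_sqr (u+v)); unfold Rsqr in *; lra.
  - destruct (Rlt_or_le w 2) as [|Hw]; auto.
    assert (u*u+v*v+w*w-u*v*w-2 - ((u-v)*(u-v)+2) = (w - 2)*(w + 2 - u*v)) by ring.
    assert (0 <= (w - 2)*(w + 2 - u*v)) by (apply Rmult_le_pos; nra).
    pose proof (Rle_0_sqr (u-v)); unfold Rsqr in *; lra.
Qed.

Lemma Ek_intro k x y z : -2 <= k < 2 -> kappa (x,y,z) = k ->
  -2 <= x <= 2 -> -2 <= y <= 2 -> E_k k (x,y,z).
Proof.
  intros Hk Hka Hx Hy. unfold E_k, E, in_cube. simpl in *.
  pose proof (kappa_bound x y z Hx Hy ltac:(lra)). repeat split; lra.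
Qed.

Lemma Ek_sq k x y z : E_k k (x,y,z) -> x*x <= k+2 /\ y*y <= k+2 /\ z*z <= k+2.
Proof.
  unfold E_k, E, in_cube, kappa. intros [[[Hx [Hy Hz]] _] Hk].
  repeat split.
  - assert (0 <= y*y+z*z-x*y*z). { destruct (Rle_dec 0 (y*z)); [assert (0 <= (2-x)*(y*z)) by (apply Rmult_le_pos; lra); pose proof (Rle_0_sqr (y-z)) | assert (0 <= (2+x)*(-(y*z))) by (apply Rmult_le_pos; lra); pose proof (Rle_0_sqr (y+z))]; unfold Rsqr in *; nra. } nra.
  - assert (0 <= x*x+z*z-x*y*z). { destruct (Rle_dec 0 (x*z)); [assert (0 <= (2-y)*(x*z)) by (apply Rmult_le_pos; lra); pose proof (Rle_0_sqr (x-z)) | assert (0 <= (2+y)*(-(x*z))) by (apply Rmult_le_pos; lra); pose proof (Rle_0_sqr (x+z))]; unfold Rsqr in *; nra. } nra.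
  - assert (0 <= x*x+y*y-x*y*z). { destruct (Rle_dec 0 (x*y)); [assert (0 <= (2-z)*(x*y)) by (apply Rmult_le_pos; lra); pose proof (Rle_0_sqr (x-y)) | assert (0 <= (2+z)*(-(x*y))) by (apply Rmult_le_pos; lra); pose proof (Rle_0_sqr (x+y))]; unfold Rsqr in *; nra. } nra.
Qed.

Lemma orbit_Ek k p0 q : -2 <= k < 2 -> E_k k p0 -> orbit p0 q -> E_k k q.
Proof.
  intros Hk H0 Ho. induction Ho as [|p Ho IH|p Ho IH|p Ho IH|p Ho IH]; auto;
  destruct p as [[x y] z]; destruct IH as [[[Hx [Hy Hz]] _] Hka];
  unfold kappa in Hka; simpl in *.
  - apply Ek_intro; auto. unfold kappa. rewrite <- Hka. ring.
  -
    apply Ek_intro; auto. unfold kappa. rewrite <- Hka. ring.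
  -
    assert (E1 : x*x + y*y + (x*y-z)*(x*y-z) - x*y*(x*y-z) - 2 = k) by (rewrite <- Hka; ring).
    pose proof (kappa_bound x y (x*y-z) Hx Hy ltac:(lra)).
    apply Ek_intro; auto. unfold kappa. rewrite <- Hka. ring. lra.
  - assert (E1 : y*y + x*x + (y*x-z)*(y*x-z) - y*x*(y*x-z) - 2 = k) by (rewrite <- Hka; ring).
    pose proof (kappa_bound y x (y*x-z) Hy Hx ltac:(lra)).
    apply Ek_intro; auto. unfold kappa. rewrite <- Hka. ring. lra.
Qed.


Lemma abs_le_b a b : Rabs a <= b -> -b <= a <= b.
Proof. unfold Rabs; destruct Rcase_abs; lra. Qed.
Lemma abs_lt_b a b : Rabs a < b -> -b < a < b.
Proof. unfold Rabs; destruct Rcase_abs; lra. Qed.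
Lemma b_abs_le a b : -b <= a <= b -> Rabs a <= b.
Proof. unfold Rabs; destruct Rcase_abs; lra. Qed.
Lemma b_abs_lt a b : -b < a < b -> Rabs a < b.
Proof. unfold Rabs; destruct Rcase_abs; lra. Qed.

Lemma abs_sin_le x : Rabs (sin x) <= Rabs x.
Proof.
  assert (Hpos : forall y, 0 < y -> Rabs (sin y) <= y).
  { intros y Hy. pose proof (sin_lt_x y Hy). pose proof PI2_1.
    destruct (Rle_dec y 1).
    - rewrite Rabs_right; [lra|]. apply Rle_ge, sin_ge_0; lra.
    - pose proof (SIN_bound y). apply Rabs_le; lra. }
  destruct (Rtotal_order x 0) as [H|[H|H]].
  - rewrite <- (Ropp_involutive x), sin_neg, Rabs_Ropp, Rabs_Ropp.
    rewrite (Rabs_right (- x)) by lra. apply Hpos; lra.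
  - subst. rewrite sin_0, Rabs_R0. lra.
  - rewrite (Rabs_right x) by lra. apply Hpos; lra.
Qed.

Lemma cos_lip p q : Rabs (cos p - cos q) <= Rabs (p - q).
Proof.
  rewrite form2. rewrite !Rabs_mult.
  pose proof (abs_sin_le ((p-q)/2)). pose proof (SIN_bound ((p+q)/2)).
  assert (Rabs (sin ((p+q)/2)) <= 1) by (apply Rabs_le; lra).
  assert (Rabs ((p-q)/2) = Rabs (p-q) / 2).
  { unfold Rdiv. rewrite Rabs_mult, (Rabs_right (/2)) by lra. reflexivity. }
  rewrite Rabs_left by lra.
  pose proof (Rabs_pos (sin ((p-q)/2))). pose proof (Rabs_pos (sin ((p+q)/2))).
  nra.
Qed.

Lemma cos_periodZ x (J : Z) : cos (x + 2 * PI * IZR J) = cos x.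
Proof.
  destruct (Z_le_gt_dec 0 J) as [H|H].
  - rewrite <- (Z2Nat.id J) by lia. rewrite <- INR_IZR_INZ.
    replace (x + 2 * PI * INR (Z.to_nat J)) with (x + 2 * INR (Z.to_nat J) * PI) by ring.
    apply cos_period.
  - set (n := Z.to_nat (- J)).
    assert (IZR J = - INR n). { unfold n. rewrite INR_IZR_INZ, Z2Nat.id by lia. rewrite opp_IZR. ring. }
    rewrite H0. rewrite <- (cos_period (x + 2 * PI * - INR n) n). f_equal. ring.
Qed.

Lemma polar u v : exists phi,
  u = sqrt (u*u+v*v) * cos phi /\ v = sqrt (u*u+v*v) * sin phi.
Proof.
  set (r := sqrt (u*u+v*v)).
  assert (Hr0 : 0 <= r) by apply sqrt_pos.
  assert (Hr2 : r * r = u*u+v*v) by (apply sqrt_sqrt; nra).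
  destruct (Req_dec r 0) as [Hr|Hr].
  - exists 0. rewrite Hr in Hr2. assert (u = 0) by nra. assert (v = 0) by nra.
    rewrite Hr. lra.
  - assert (Hb : -1 <= u / r <= 1).
    { assert (u*u <= r*r) by nra. assert (Rabs u <= r).
      { assert (H' : u² <= r²) by (unfold Rsqr; lra). apply Rsqr_le_abs_0 in H'. rewrite (Rabs_right r) in H' by lra. lra. }
      apply abs_le_b in H0. split.
      - apply (Rmult_le_reg_r r); [lra|]. unfold Rdiv. rewrite Rmult_assoc, Rinv_l by lra. lra.
      - apply (Rmult_le_reg_r r); [lra|]. unfold Rdiv. rewrite Rmult_assoc, Rinv_l by lra. lra. }
    assert (Hs : sqrt (1 - (u/r)²) = Rabs v / r).
    { replace (1 - (u/r)²) with ((v/r)²).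
      - rewrite sqrt_Rsqr_abs. unfold Rdiv. rewrite Rabs_mult, (Rabs_right (/r)). reflexivity.
        apply Rle_ge, Rlt_le, Rinv_0_lt_compat; lra.
      - unfold Rsqr. apply (Rmult_eq_reg_r (r*r)); [|nra].
        replace (v / r * (v / r) * (r * r)) with (v*v) by (field; lra).
        replace ((1 - u / r * (u / r)) * (r * r)) with (r*r - u*u) by (field; lra). lra. }
    destruct (Rle_dec 0 v) as [Hv|Hv].
    + exists (acos (u/r)). rewrite cos_acos, sin_acos, Hs by lra.
      rewrite Rabs_right by lra. split; field; lra.
    + exists (- acos (u/r)). rewrite cos_neg, sin_neg, cos_acos, sin_acos, Hs by lra.
      rewrite Rabs_left by lra. split; field; lra.
Qed.


Definition th (a:R) := acos (a/2).
Definition Rk k a := sqrt ((k+2-a*a) / (1 - a*a/4)).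
Definition Gx k a phi : pt := (a, Rk k a * cos phi, Rk k a * cos (phi + th a)).

Lemma cos_th a : -2 <= a <= 2 -> cos (th a) = a/2.
Proof. intros. unfold th. apply cos_acos. lra. Qed.

Lemma sin_th a : -2 <= a <= 2 -> sin (th a) = sqrt (1 - (a/2)*(a/2)).
Proof. intros. unfold th. rewrite sin_acos by lra. reflexivity. Qed.

Lemma cos_rec a phi : -2 <= a <= 2 ->
  a * cos (phi + th a) - cos phi = cos (phi + th a + th a).
Proof.
  intros Ha. assert (Ea : a = 2 * cos (th a)) by (rewrite cos_th; lra). rewrite Ea at 1.
  replace (cos phi) with (cos ((phi + th a) - th a)) by (f_equal; ring).
  rewrite (cos_plus (phi + th a) (th a)), cos_minus. ring.
Qed.

Lemma cos_rec' a phi : -2 <= a <= 2 ->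
  a * cos phi - cos (phi + th a) = cos (phi - th a).
Proof.
  intros Ha. assert (Ea : a = 2 * cos (th a)) by (rewrite cos_th; lra). rewrite Ea at 1.
  rewrite cos_plus, cos_minus. ring.
Qed.

Lemma tauX_Gx k a phi : -2 <= a <= 2 -> tauX (Gx k a phi) = Gx k a (phi + th a).
Proof.
  intros Ha. unfold Gx, tauX. f_equal.
  replace (a * (Rk k a * cos (phi + th a)) - Rk k a * cos phi)
    with (Rk k a * (a * cos (phi + th a) - cos phi)) by ring.
  rewrite cos_rec by auto. reflexivity.
Qed.

Lemma tauXi_Gx k a phi : -2 <= a <= 2 -> tauX_inv (Gx k a phi) = Gx k a (phi - th a).
Proof.
  intros Ha. unfold Gx, tauX_inv. f_equal. f_equal.
  - replace (a * (Rk k a * cos phi) - Rk k a * cos (phi + th a))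
      with (Rk k a * (a * cos phi - cos (phi + th a))) by ring.
    rewrite cos_rec' by auto. reflexivity.
  - f_equal. f_equal. ring.
Qed.

Lemma rot_nat k a p0 : -2 <= a <= 2 -> forall n phi,
  orbit p0 (Gx k a phi) ->
  orbit p0 (Gx k a (phi + INR n * th a)) /\ orbit p0 (Gx k a (phi - INR n * th a)).
Proof.
  intros Ha n. induction n as [|n IH]; intros phi H.
  - simpl. rewrite Rmult_0_l, Rplus_0_r, Rminus_0_r. auto.
  - rewrite S_INR. split.
    + replace (phi + (INR n + 1) * th a) with ((phi + th a) + INR n * th a) by ring.
      apply IH. rewrite <- tauX_Gx by auto. now apply orbit_X.
    + replace (phi - (INR n + 1) * th a) with ((phi - th a) - INR n * th a) by ring.
      apply IH. rewrite <- tauXi_Gx by auto. now apply orbit_Xi.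
Qed.

Lemma rot k a p0 phi (N : Z) : -2 <= a <= 2 ->
  orbit p0 (Gx k a phi) -> orbit p0 (Gx k a (phi + IZR N * th a)).
Proof.
  intros Ha H. destruct (Z_le_gt_dec 0 N) as [HN|HN].
  - rewrite <- (Z2Nat.id N) by lia. rewrite <- INR_IZR_INZ.
    apply rot_nat; auto.
  - assert (IZR N = - INR (Z.to_nat (- N))).
    { rewrite INR_IZR_INZ, Z2Nat.id by lia. rewrite opp_IZR. ring. }
    rewrite H0. replace (phi + - INR (Z.to_nat (- N)) * th a) with (phi - INR (Z.to_nat (- N)) * th a) by ring.
    apply rot_nat; auto.
Qed.

Lemma Gx_rep k a y z : -2 < k < 2 -> E_k k (a,y,z) -> exists phi, (a,y,z) = Gx k a phi.
Proof.
  intros Hk HE. destruct (Ek_sq _ _ _ _ HE) as [Ha2 _].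
  destruct HE as [_ Hka]. unfold kappa in Hka.
  assert (Ha : -2 < a < 2) by nra.
  set (S := sqrt (1 - (a/2)*(a/2))).
  assert (HS2 : S * S = 1 - (a/2)*(a/2)) by (apply sqrt_sqrt; nra).
  assert (HS0 : 0 < S) by (apply sqrt_lt_R0; nra).
  set (v := (y * (a/2) - z) / S).
  destruct (polar y v) as [phi [Hu Hv]].
  assert (Hr : sqrt (y*y + v*v) = Rk k a).
  { unfold Rk. f_equal. unfold v.
    replace (1 - a * a / 4) with (S*S) by (rewrite HS2; field).
    apply (Rmult_eq_reg_r (S*S)); [|nra].
    replace ((y * y + (y * (a / 2) - z) / S * ((y * (a / 2) - z) / S)) * (S * S))
      with (y*y*(S*S) + (y * (a / 2) - z)*(y * (a / 2) - z)) by (field; lra).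
    replace ((k + 2 - a * a) / (S * S) * (S * S)) with (k+2-a*a) by (field; lra).
    rewrite HS2, <- Hka. field. }
  rewrite Hr in Hu, Hv.
  exists phi. unfold Gx. f_equal; [f_equal; auto|].
  rewrite cos_plus, cos_th, sin_th by lra. fold S.
  assert (z = y * (a/2) - S * v) by (unfold v; field; lra).
  rewrite H, Hu, Hv. ring.
Qed.


Lemma php : forall n (f : nat -> nat), (forall i, (i <= n)%nat -> (f i < n)%nat) ->
  exists i j, (i < j <= n)%nat /\ f i = f j.
Proof.
  induction n as [|n IH]; intros f Hf.
  - specialize (Hf 0%nat (le_n 0)). lia.
  - destruct (classic (exists i, (i <= n)%nat /\ f i = f (S n))) as [[i [Hi E]]|Hno].
    + exists i, (S n). split; [lia|auto].
    + set (c := f (S n)).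
      assert (Hc : (c < S n)%nat) by (apply Hf; lia).
      destruct (Nat.eq_dec c n) as [Ecn|Ecn].
      * destruct (IH f) as [i [j [Hij E]]].
        { intros i Hi. assert (f i < S n)%nat by (apply Hf; lia).
          assert (f i <> n). { intro. apply Hno. exists i. split; auto. fold c. lia. }
          lia. }
        exists i, j. split; [lia|auto].
      * set (g := fun i => if Nat.eq_dec (f i) n then c else f i).
        destruct (IH g) as [i [j [Hij E]]].
        { intros i Hi. unfold g. destruct (Nat.eq_dec (f i) n); [lia|].
          assert (f i < S n)%nat by (apply Hf; lia). lia. }
        exists i, j. split; [lia|].
        unfold g in E. destruct (Nat.eq_dec (f i) n), (Nat.eq_dec (f j) n); try lia.
        -- exfalso. apply Hno. exists j. split; [lia|]. fold c. lia.
        -- exfalso. apply Hno. exists i. split; [lia|]. fold c. lia.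
Qed.

Lemma dirichlet (theta : R) (M : nat) : (1 <= M)%nat ->
  (forall m : nat, (1 <= m <= M)%nat -> forall J : Z, INR m * theta <> 2*PI*IZR J) ->
  forall phi0 phis, exists N J : Z,
    Rabs (phi0 + IZR N * theta - 2*PI*IZR J - phis) <= PI / INR M.
Proof.
  intros HM Hnp phi0 phis.
  pose proof PI_RGT_0 as Hpi.
  assert (HMr : 1 <= INR M) by (apply (le_INR 1); auto).
  set (t := fun i : nat => INR i * theta / (2*PI)).
  set (e := fun i : nat => t i - IZR (Zfloor (t i))).
  assert (He : forall i, 0 <= e i < 1).
  { intro i. unfold e. pose proof (Zfloor_bound (t i)). lra. }
  set (f := fun i => Z.to_nat (Zfloor (INR M * e i))).
  assert (Hfl0 : forall i, (0 <= Zfloor (INR M * e i))%Z).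
  { intro i. apply Zfloor_lub. simpl. specialize (He i). nra. }
  assert (HflM : forall i, (Zfloor (INR M * e i) < Z.of_nat M)%Z).
  { intro i. apply lt_IZR. rewrite <- INR_IZR_INZ.
    pose proof (Zfloor_bound (INR M * e i)). specialize (He i). nra. }
  destruct (php M f) as [i [j [Hij Ef]]].
  { intros i _. unfold f. specialize (Hfl0 i). specialize (HflM i). lia. }
  unfold f in Ef. apply Z2Nat.inj in Ef; [|apply Hfl0|apply Hfl0].
  assert (Hdiff : Rabs (e j - e i) < 1 / INR M).
  { pose proof (Zfloor_bound (INR M * e i)). pose proof (Zfloor_bound (INR M * e j)).
    rewrite Ef in *.
    assert (Hb : -1 < INR M * (e j - e i) < 1) by (rewrite Rmult_minus_distr_l; lra).
    apply b_abs_lt.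
    replace (e j - e i) with ((INR M * (e j - e i)) / INR M) by (field; lra).
    split; unfold Rdiv.
    - replace (- (1 * / INR M)) with (-1 * / INR M) by ring.
      apply Rmult_lt_compat_r; [apply Rinv_0_lt_compat; lra|lra].
    - apply Rmult_lt_compat_r; [apply Rinv_0_lt_compat; lra|lra]. }
  set (m := (j - i)%nat).
  set (J0 := (Zfloor (t j) - Zfloor (t i))%Z).
  set (d := INR m * theta - 2*PI*IZR J0).
  assert (Hd : d = 2*PI*(e j - e i)).
  { unfold d, e, J0, m, t. rewrite minus_INR by lia. rewrite minus_IZR. field. lra. }
  assert (Hd0 : d <> 0) by (unfold d; intro Hz; apply (Hnp m ltac:(unfold m; lia) J0); lra).
  assert (Hdb : Rabs d < 2*PI / INR M).
  { rewrite Hd, Rabs_mult, (Rabs_right (2*PI)) by lra.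
    replace (2*PI/INR M) with (2*PI * (1/INR M)) by (field; lra).
    apply Rmult_lt_compat_l; lra. }
  set (n := Zfloor ((phis - phi0)/d + 1/2)).
  exists (n * Z.of_nat m)%Z, (n * J0)%Z.
  rewrite !mult_IZR, <- INR_IZR_INZ.
  replace (phi0 + IZR n * INR m * theta - 2 * PI * (IZR n * IZR J0) - phis)
    with (IZR n * d - (phis - phi0)) by (unfold d; ring).
  pose proof (Zfloor_bound ((phis - phi0)/d + 1/2)). fold n in H.
  assert (Habs : Rabs (IZR n - (phis - phi0)/d) <= 1/2) by (apply b_abs_le; lra).
  replace (IZR n * d - (phis - phi0)) with ((IZR n - (phis - phi0)/d) * d) by (field; auto).
  rewrite Rabs_mult.
  apply Rle_trans with (1/2 * Rabs d).
  - apply Rmult_le_compat_r; [apply Rabs_pos|auto].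
  - replace (PI / INR M) with (1/2 * (2 * PI / INR M)) by (field; lra). lra.
Qed.

Definition Pl (M : nat) : list R :=
  flat_map (fun m => map (fun j => 2 * cos (2*PI*INR j / INR m)) (seq 0 m)) (seq 1 M).

Lemma Pl_mono M M' a : (M <= M')%nat -> In a (Pl M) -> In a (Pl M').
Proof.
  unfold Pl. intros HM H. apply in_flat_map in H. destruct H as [m [Hm H]].
  apply in_flat_map. exists m. split; auto. apply in_seq in Hm. apply in_seq. lia.
Qed.

Lemma Pl_spec M a : ~ In a (Pl M) -> -2 <= a <= 2 ->
  forall m, (1 <= m <= M)%nat -> forall J, INR m * th a <> 2*PI*IZR J.
Proof.
  intros Hn Ha m Hm J E. apply Hn.
  assert (Hmr : 0 < INR m) by (apply lt_0_INR; lia).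
  pose proof (Z.div_mod J (Z.of_nat m) ltac:(lia)) as Hdm.
  pose proof (Z.mod_pos_bound J (Z.of_nat m) ltac:(lia)) as Hb.
  set (q := (J / Z.of_nat m)%Z) in *. set (j := (J mod Z.of_nat m)%Z) in *.
  assert (Ea : a = 2 * cos (2*PI*INR (Z.to_nat j) / INR m)).
  { rewrite INR_IZR_INZ, Z2Nat.id by lia.
    assert (th a = 2*PI*IZR J / INR m) by (rewrite <- E; field; lra).
    rewrite Hdm, plus_IZR, mult_IZR, <- INR_IZR_INZ in H.
    replace (2 * PI * (INR m * IZR q + IZR j) / INR m) with (2*PI*IZR j / INR m + 2*PI*IZR q) in H
      by (field; lra).
    transitivity (2 * cos (th a)); [rewrite cos_th by lra; field|]. rewrite H, cos_periodZ. reflexivity. }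
  unfold Pl. apply in_flat_map. exists m. split; [apply in_seq; lia|].
  apply in_map_iff. exists (Z.to_nat j). split; [auto|]. apply in_seq. lia.
Qed.
Module CQ.
Import Coquelicot.Coquelicot.
Lemma cont_eps (f : R -> R) a : ex_derive f a -> forall eps, eps > 0 -> exists delta, delta > 0 /\
  forall y, Rabs (y - a) < delta -> Rabs (f y - f a) < eps.
Proof.
  intros Hd eps He.
  apply ex_derive_continuous in Hd.
  apply continuity_pt_filterlim in Hd.
  destruct (Hd eps He) as [d [Hd0 Hd1]].
  exists d. split; auto. intros y Hy. destruct (Req_dec y a) as [->|Hne]; [unfold Rminus; rewrite Rplus_opp_r, Rabs_R0; lra|]. apply Hd1. simpl. unfold R_dist. split; auto. unfold D_x, no_cond. split; auto.
Qed.


Lemma cont_f1 k a : -2 < k < 2 -> a*a < k+2 -> forall eps, eps > 0 -> exists delta, delta > 0 /\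
  forall y, Rabs (y - a) < delta -> Rabs (Rk k y - Rk k a) < eps.
Proof.
  intros Hk Ha. apply (cont_eps (fun a => Rk k a)). unfold Rk; auto_derive; repeat split; try nra;
     apply Rmult_lt_0_compat; [lra|]; apply Rinv_0_lt_compat; nra.
Qed.
Lemma cont_f2 k a : -2 < k < 2 -> a*a < k+2 -> forall eps, eps > 0 -> exists delta, delta > 0 /\
  forall y, Rabs (y - a) < delta -> Rabs (Rk k y * (y/2) - Rk k a * (a/2)) < eps.
Proof.
  intros Hk Ha. apply (cont_eps (fun a => Rk k a * (a/2))). unfold Rk; auto_derive; repeat split; try nra;
     apply Rmult_lt_0_compat; [lra|]; apply Rinv_0_lt_compat; nra.
Qed.
Lemma cont_f3 k a : -2 < k < 2 -> a*a < k+2 -> forall eps, eps > 0 -> exists delta, delta > 0 /\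
  forall y, Rabs (y - a) < delta -> Rabs (Rk k y * sqrt (1 - (y/2)*(y/2)) - Rk k a * sqrt (1 - (a/2)*(a/2))) < eps.
Proof.
  intros Hk Ha. apply (cont_eps (fun a => Rk k a * sqrt (1 - (a/2)*(a/2)))). unfold Rk; auto_derive; repeat split; try nra;
     apply Rmult_lt_0_compat; [lra|]; apply Rinv_0_lt_compat; nra.
Qed.
End CQ.

Definition dl1 (p q : pt) : R :=
  Rabs (xc p - xc q) + Rabs (yc p - yc q) + Rabs (zc p - zc q).

Lemma dl1_tri p q r : dl1 p r <= dl1 p q + dl1 q r.
Proof.
  unfold dl1.
  pose proof (Rabs_triang (xc p - xc q) (xc q - xc r)).
  pose proof (Rabs_triang (yc p - yc q) (yc q - yc r)).
  pose proof (Rabs_triang (zc p - zc q) (zc q - zc r)).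
  replace (xc p - xc r) with ((xc p - xc q) + (xc q - xc r)) by ring.
  replace (yc p - yc r) with ((yc p - yc q) + (yc q - yc r)) by ring.
  replace (zc p - zc r) with ((zc p - zc q) + (zc q - zc r)) by ring.
  lra.
Qed.

Lemma dist3_le_dl1 p q : dist3 p q <= dl1 p q.
Proof.
  destruct p as [[x y] z], q as [[x' y'] z']. unfold dist3, dl1, xc, yc, zc. cbn [fst snd].
  set (a := Rabs (x - x')). set (b := Rabs (y - y')). set (c := Rabs (z - z')).
  assert (0 <= a) by apply Rabs_pos. assert (0 <= b) by apply Rabs_pos. assert (0 <= c) by apply Rabs_pos.
  rewrite <- (sqrt_square (a+b+c)) by lra.
  apply sqrt_le_1_alt.
  rewrite <- (pow2_abs (x-x')), <- (pow2_abs (y-y')), <- (pow2_abs (z-z')). fold a b c.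
  assert (E : (a+b+c)*(a+b+c) = a^2+b^2+c^2 + 2*(a*b+b*c+c*a)) by ring. rewrite E.
  assert (0 <= a*b) by (apply Rmult_le_pos; lra).
  assert (0 <= b*c) by (apply Rmult_le_pos; lra).
  assert (0 <= c*a) by (apply Rmult_le_pos; lra). lra.
Qed.

Lemma dist3_ge_x p q : Rabs (xc p - xc q) <= dist3 p q.
Proof.
  destruct p as [[x y] z], q as [[x' y'] z']. unfold dist3, xc. cbn [fst snd].
  rewrite <- sqrt_Rsqr_abs. apply sqrt_le_1_alt. rewrite Rsqr_pow2.
  pose proof (pow2_ge_0 (y - y')). pose proof (pow2_ge_0 (z - z')). lra.
Qed.

Lemma dist3_ge_y p q : Rabs (yc p - yc q) <= dist3 p q.
Proof.
  destruct p as [[x y] z], q as [[x' y'] z']. unfold dist3, yc. cbn [fst snd].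
  rewrite <- sqrt_Rsqr_abs. apply sqrt_le_1_alt. rewrite Rsqr_pow2.
  pose proof (pow2_ge_0 (x - x')). pose proof (pow2_ge_0 (z - z')). lra.
Qed.

Definition Bk k := sqrt (4*(k+2)/(2-k)).

Lemma Rk_le_Bk k a : -2 < k < 2 -> a*a <= k+2 -> Rk k a <= Bk k.
Proof.
  intros Hk Ha. unfold Rk, Bk. apply sqrt_le_1_alt.
  assert (0 <= a*a) by nra.
  replace ((k + 2 - a * a) / (1 - a * a / 4)) with (4*(k + 2 - a * a) / (4 - a * a)) by (field; nra).
  unfold Rdiv. apply Rle_trans with (4 * (k+2 - a*a) * / (2 - k)).
  - apply Rmult_le_compat_l; [nra|]. apply Rinv_le_contravar; lra.
  - apply Rmult_le_compat_r; [apply Rlt_le, Rinv_0_lt_compat; lra|nra].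
Qed.

Lemma Rk_pos k a : -2 < k < 2 -> a*a < k+2 -> 0 < Rk k a.
Proof.
  intros Hk Ha. unfold Rk. apply sqrt_lt_R0. unfold Rdiv.
  apply Rmult_lt_0_compat; [lra|]. apply Rinv_0_lt_compat. nra.
Qed.

Lemma Rk_nonneg k a : 0 <= Rk k a.
Proof. apply sqrt_pos. Qed.

Lemma Gx_dl1 k a phi psi :
  dl1 (Gx k a phi) (Gx k a psi) <=
  Rk k a * (Rabs (cos phi - cos psi) + Rabs (cos (phi + th a) - cos (psi + th a))).
Proof.
  unfold dl1, Gx, xc, yc, zc. simpl.
  unfold Rminus at 1. rewrite Rplus_opp_r, Rabs_R0.
  rewrite <- !Rmult_minus_distr_l, !Rabs_mult, (Rabs_right (Rk k a)) by (apply Rle_ge, Rk_nonneg).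
  lra.
Qed.

Lemma rot_dense k a p0 M phi0 phis : -2 <= a <= 2 -> (1 <= M)%nat -> ~ In a (Pl M) ->
  orbit p0 (Gx k a phi0) ->
  exists psi, orbit p0 (Gx k a psi) /\ Rabs (cos psi - cos phis) <= PI / INR M /\
     Rabs (cos (psi + th a) - cos (phis + th a)) <= PI / INR M.
Proof.
  intros Ha HM Hn Ho.
  destruct (dirichlet (th a) M HM (Pl_spec M a Hn Ha) phi0 phis) as [N [J HNJ]].
  exists (phi0 + IZR N * th a). split; [apply rot; auto|].
  set (psi := phi0 + IZR N * th a) in *.
  assert (E1 : cos psi = cos (psi - 2*PI*IZR J)).
  { rewrite <- (cos_periodZ (psi - 2*PI*IZR J) J). f_equal. ring. }
  assert (E2 : cos (psi + th a) = cos (psi + th a - 2*PI*IZR J)).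
  { rewrite <- (cos_periodZ (psi + th a - 2*PI*IZR J) J). f_equal. ring. }
  rewrite E1, E2. split.
  - eapply Rle_trans; [apply cos_lip|]. auto.
  - eapply Rle_trans; [apply cos_lip|].
    replace (psi + th a - 2 * PI * IZR J - (phis + th a)) with (psi - 2 * PI * IZR J - phis) by ring.
    auto.
Qed.

Lemma Gx_z k a phi : -2 <= a <= 2 ->
  zc (Gx k a phi) = Rk k a * (a/2) * cos phi - Rk k a * sqrt (1 - (a/2)*(a/2)) * sin phi.
Proof.
  intros Ha. unfold Gx, zc. cbn [fst snd]. rewrite cos_plus, cos_th, sin_th by lra. ring.
Qed.

Lemma Gx_cont k a phi : -2 < k < 2 -> a*a < k+2 -> forall eps, eps > 0 ->
  exists delta, delta > 0 /\ forall a', Rabs (a' - a) < delta -> -2 <= a' <= 2 ->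
  dl1 (Gx k a phi) (Gx k a' phi) < eps.
Proof.
  intros Hk Ha eps He.
  assert (Ha4 : a * a < 4) by lra.
  assert (Hab : -2 <= a <= 2) by nra.
  destruct (CQ.cont_f1 k a Hk Ha (eps/4) ltac:(lra)) as [dl1' [Hd1 H1]].
  destruct (CQ.cont_f2 k a Hk Ha (eps/4) ltac:(lra)) as [d2 [Hd2 H2]].
  destruct (CQ.cont_f3 k a Hk Ha (eps/4) ltac:(lra)) as [d3 [Hd3 H3]].
  exists (Rmin (eps/4) (Rmin dl1' (Rmin d2 d3))). split.
  { repeat apply Rmin_pos; lra. }
  intros a' Ha' Hb.
  assert (Ha1 : Rabs (a' - a) < eps/4) by (eapply Rlt_le_trans; [apply Ha'|]; apply Rmin_l).
  assert (Hr : Rabs (a' - a) < Rmin dl1' (Rmin d2 d3)) by (eapply Rlt_le_trans; [apply Ha'|]; apply Rmin_r).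
  specialize (H1 a' ltac:(eapply Rlt_le_trans; [apply Hr|]; apply Rmin_l)).
  specialize (H2 a' ltac:(eapply Rlt_le_trans; [apply Hr|]; eapply Rle_trans; [apply Rmin_r|]; apply Rmin_l)).
  specialize (H3 a' ltac:(eapply Rlt_le_trans; [apply Hr|]; eapply Rle_trans; [apply Rmin_r|]; apply Rmin_r)).
  cbn beta in H1, H2, H3.
  unfold dl1. rewrite !Gx_z by auto. unfold Gx, xc, yc. cbn [fst snd].
  pose proof (COS_bound phi). pose proof (SIN_bound phi).
  set (u2 := Rk k a * (a/2)) in *. set (v2 := Rk k a' * (a'/2)) in *.
  set (u3 := Rk k a * sqrt (1 - a/2*(a/2))) in *. set (v3 := Rk k a' * sqrt (1 - a'/2*(a'/2))) in *.
  set (u1 := Rk k a) in *. set (v1 := Rk k a') in *.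
  replace (u1 * cos phi - v1 * cos phi) with ((u1 - v1) * cos phi) by ring.
  replace (u2 * cos phi - u3 * sin phi - (v2 * cos phi - v3 * sin phi))
    with ((u2 - v2) * cos phi - (u3 - v3) * sin phi) by ring.
  assert (Rabs ((u1 - v1) * cos phi) <= Rabs (u1 - v1)).
  { rewrite Rabs_mult. pose proof (Rabs_pos (u1 - v1)).
    assert (Rabs (cos phi) <= 1) by (apply b_abs_le; lra). nra. }
  assert (Rabs ((u2 - v2) * cos phi) <= Rabs (u2 - v2)).
  { rewrite Rabs_mult. pose proof (Rabs_pos (u2 - v2)).
    assert (Rabs (cos phi) <= 1) by (apply b_abs_le; lra). nra. }
  assert (Rabs ((u3 - v3) * sin phi) <= Rabs (u3 - v3)).
  { rewrite Rabs_mult. pose proof (Rabs_pos (u3 - v3)).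
    assert (Rabs (sin phi) <= 1) by (apply b_abs_le; lra). nra. }
  pose proof (Rabs_triang ((u2 - v2) * cos phi) (- ((u3 - v3) * sin phi))) as Htr.
  rewrite Rabs_Ropp in Htr.
  rewrite Rabs_minus_sym in Ha1. rewrite (Rabs_minus_sym u1), (Rabs_minus_sym u2), (Rabs_minus_sym u3) in *.
  unfold Rminus at 3. lra.
Qed.

Definition cl (p0 t : pt) : Prop :=
  forall eps, eps > 0 -> exists o, orbit p0 o /\ dist3 t o < eps.
Definition xapp (p0 : pt) (a : R) : Prop :=
  forall (M : nat) eps, eps > 0 -> exists o, orbit p0 o /\ ~ In (xc o) (Pl M) /\ Rabs (xc o - a) < eps.
Definition yapp (p0 : pt) (a : R) : Prop :=
  forall (M : nat) eps, eps > 0 -> exists o, orbit p0 o /\ ~ In (yc o) (Pl M) /\ Rabs (yc o - a) < eps.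

Lemma INR_up_bound x : x < INR (S (Z.to_nat (up x))).
Proof.
  rewrite S_INR. destruct (archimed x) as [H1 _].
  destruct (Z_le_gt_dec 0 (up x)).
  - rewrite INR_IZR_INZ, Z2Nat.id by lia. lra.
  - pose proof (pos_INR (Z.to_nat (up x))). apply Z.gt_lt in g. apply IZR_lt in g. lra.
Qed.

Lemma Prop_x k p0 a : -2 < k < 2 -> E_k k p0 -> a*a < k+2 -> xapp p0 a ->
  forall t, E_k k t -> xc t = a -> cl p0 t.
Proof.
  intros Hk H0 Ha Hx t Ht Hxt.
  destruct t as [[tx ty] tz]. unfold xc in Hxt; simpl in Hxt; subst tx.
  destruct (Gx_rep k a ty tz Hk Ht) as [phis Eq]. rewrite Eq.
  intros eps He.
  destruct (Gx_cont k a phis Hk Ha (eps/2) ltac:(lra)) as [delta [Hdel Hc]].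
  set (B := Bk k).
  assert (HB : 0 <= B) by apply sqrt_pos.
  set (M := S (Z.to_nat (up (4*PI*B/eps)))).
  assert (HM : 4*PI*B/eps < INR M) by apply INR_up_bound.
  assert (HM1 : (1 <= M)%nat) by (unfold M; lia).
  assert (HMr : 0 < INR M) by (apply lt_0_INR; lia).
  destruct (Hx M delta Hdel) as [o [Ho [Hn Hd]]].
  pose proof (orbit_Ek k p0 o ltac:(lra) H0 Ho) as HoE.
  destruct o as [[a' oy] oz]. unfold xc in Hn, Hd; cbn [fst snd] in Hn, Hd.
  destruct (Ek_sq _ _ _ _ HoE) as [Ha' _].
  assert (Ha'b : -2 <= a' <= 2) by nra.
  destruct (Gx_rep k a' oy oz Hk HoE) as [phi0 Eq0]. rewrite Eq0 in Ho.
  destruct (rot_dense k a' p0 M phi0 phis Ha'b HM1 Hn Ho) as [psi [Hpsi [Hb1 Hb2]]].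
  exists (Gx k a' psi). split; auto.
  eapply Rle_lt_trans; [apply dist3_le_dl1|].
  eapply Rle_lt_trans; [apply (dl1_tri _ (Gx k a' phis))|].
  specialize (Hc a' Hd Ha'b).
  assert (dl1 (Gx k a' phis) (Gx k a' psi) < eps/2).
  { eapply Rle_lt_trans; [apply Gx_dl1|].
    rewrite (Rabs_minus_sym (cos phis)), (Rabs_minus_sym (cos (phis + th a'))).
    assert (HR : Rk k a' <= B) by (apply Rk_le_Bk; lra).
    pose proof (Rk_nonneg k a').
    apply Rle_lt_trans with (B * (2 * (PI / INR M))).
    - apply Rle_trans with (Rk k a' * (2 * (PI / INR M))).
      + apply Rmult_le_compat_l; lra.
      + apply Rmult_le_compat_r; [|lra]. pose proof PI_RGT_0.
        apply Rmult_le_pos; [lra|]. unfold Rdiv. apply Rmult_le_pos; [lra|]. apply Rlt_le, Rinv_0_lt_compat; lra.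
    - pose proof PI_RGT_0.
      apply (Rmult_lt_reg_r (INR M)); [lra|].
      replace (B * (2 * (PI / INR M)) * INR M) with (2*PI*B) by (field; lra).
      apply (Rmult_lt_compat_l (eps/2)) in HM; [|lra].
      replace (eps / 2 * (4 * PI * B / eps)) with (2*PI*B) in HM by (field; lra). lra. }
  lra.
Qed.

Lemma avoid (L : list R) : forall lo hi, lo < hi -> exists c,
  lo + (hi-lo)/2^(S (length L)) <= c /\ c + (hi-lo)/2^(S (length L)) <= hi /\
  forall l, In l L -> (hi-lo)/2^(S (length L)) <= Rabs (l - c).
Proof.
  induction L as [|l L IH]; intros lo hi Hlh.
  - exists ((lo+hi)/2). simpl length. rewrite pow_1. split; [lra|]. split; [lra|]. intros l [].
  - destruct (IH lo hi Hlh) as [c [H1 [H2 H3]]].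
    set (mu := (hi - lo) / 2 ^ S (length L)) in *.
    assert (Hmu : 0 < mu) by (unfold mu; apply Rdiv_lt_0_compat; [lra|apply pow_lt; lra]).
    assert (Emu : (hi - lo) / 2 ^ S (length (l :: L)) = mu / 2).
    { unfold mu. simpl length. change (2 ^ S (S (length L))) with (2 * 2 ^ S (length L)).
      field. apply pow_nonzero. lra. }
    rewrite Emu.
    destruct (Rle_dec l c) as [Hl|Hl].
    + exists (c + mu/2). split; [lra|]. split; [lra|].
      intros l' [<-|Hin].
      * rewrite Rabs_left1 by lra. lra.
      * specialize (H3 l' Hin). unfold Rabs in *. destruct Rcase_abs, Rcase_abs; lra.
    + exists (c - mu/2). split; [lra|]. split; [lra|].
      intros l' [<-|Hin].
      * rewrite Rabs_right by lra. lra.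
      * specialize (H3 l' Hin). unfold Rabs in *. destruct Rcase_abs, Rcase_abs; lra.
Qed.

Lemma appr_x p0 a r : r > 0 -> (forall a', Rabs (a' - a) < r -> exists p, cl p0 p /\ xc p = a') ->
  xapp p0 a.
Proof.
  intros Hr H M eps He.
  set (w := Rmin r eps / 2).
  assert (Hw : 0 < w) by (unfold w; assert (0 < Rmin r eps) by (apply Rmin_pos; lra); lra).
  assert (Hwr : w < r) by (unfold w; pose proof (Rmin_l r eps); lra).
  assert (Hwe : w < eps) by (unfold w; pose proof (Rmin_r r eps); lra).
  destruct (avoid (Pl M) (a - w) (a + w) ltac:(lra)) as [c [H1 [H2 H3]]].
  set (mu := (a + w - (a - w)) / 2 ^ S (length (Pl M))) in *.
  assert (Hmu : 0 < mu) by (unfold mu; apply Rdiv_lt_0_compat; [lra|apply pow_lt; lra]).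
  destruct (H c ltac:(apply b_abs_lt; lra)) as [p [Hp Hpc]].
  destruct (Hp mu Hmu) as [o [Ho Hd]].
  pose proof (dist3_ge_x p o) as Hx. rewrite Hpc in Hx.
  exists o. split; auto. split.
  - intro Hin. specialize (H3 _ Hin). rewrite Rabs_minus_sym in H3. lra.
  - assert (Rabs (xc o - c) < mu) by (rewrite Rabs_minus_sym; lra).
    apply abs_lt_b in H0. apply b_abs_lt. lra.
Qed.


Definition sw (p : pt) : pt := let '(x, y, z) := p in (y, x, z).

Lemma sw_sw p : sw (sw p) = p.
Proof. destruct p as [[x y] z]. reflexivity. Qed.

Lemma orbit_sw p0 q : orbit p0 q -> orbit (sw p0) (sw q).
Proof.
  induction 1 as [|p Ho IH|p Ho IH|p Ho IH|p Ho IH].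
  - constructor.
  - destruct p as [[x y] z]. apply (orbit_Y _ _ IH).
  - destruct p as [[x y] z]. apply (orbit_X _ _ IH).
  - destruct p as [[x y] z]. apply (orbit_Yi _ _ IH).
  - destruct p as [[x y] z]. apply (orbit_Xi _ _ IH).
Qed.

Lemma orbit_sw' p0 q : orbit (sw p0) q -> orbit p0 (sw q).
Proof. intro H. apply orbit_sw in H. rewrite sw_sw in H. exact H. Qed.

Lemma Ek_sw k p : E_k k p -> E_k k (sw p).
Proof.
  destruct p as [[x y] z]. unfold E_k, E, in_cube, kappa. simpl.
  intros [[[Hx [Hy Hz]] H1] H2].
  replace (y*y + x*x + z*z - y*x*z - 2) with (x*x + y*y + z*z - x*y*z - 2) by ring.
  tauto.
Qed.

Lemma dist3_sw p q : dist3 (sw p) (sw q) = dist3 p q.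
Proof.
  destruct p as [[x y] z], q as [[x' y'] z']. unfold dist3. simpl. f_equal. ring.
Qed.

Lemma cl_sw p0 t : cl p0 t -> cl (sw p0) (sw t).
Proof.
  intros H eps He. destruct (H eps He) as [o [Ho Hd]].
  exists (sw o). split; [apply orbit_sw; auto|]. rewrite dist3_sw. auto.
Qed.

Lemma cl_sw' p0 t : cl (sw p0) (sw t) -> cl p0 t.
Proof.
  intros H eps He. destruct (H eps He) as [o [Ho Hd]].
  exists (sw o). split; [apply orbit_sw'; auto|].
  rewrite <- dist3_sw, sw_sw. auto.
Qed.

Lemma xc_sw p : xc (sw p) = yc p.
Proof. destruct p as [[x y] z]. reflexivity. Qed.
Lemma yc_sw p : yc (sw p) = xc p.
Proof. destruct p as [[x y] z]. reflexivity. Qed.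

Lemma Prop_y k p0 b : -2 < k < 2 -> E_k k p0 -> b*b < k+2 -> yapp p0 b ->
  forall t, E_k k t -> yc t = b -> cl p0 t.
Proof.
  intros Hk H0 Hb Hy t Ht Hyt. apply cl_sw'.
  apply (Prop_x k (sw p0) b Hk (Ek_sw k p0 H0) Hb).
  - intros M eps He. destruct (Hy M eps He) as [o [Ho [Hn Hd]]].
    exists (sw o). split; [apply orbit_sw; auto|]. rewrite xc_sw. auto.
  - apply Ek_sw; auto.
  - rewrite xc_sw. auto.
Qed.

Lemma appr_y p0 b r : r > 0 -> (forall b', Rabs (b' - b) < r -> exists p, cl p0 p /\ yc p = b') ->
  yapp p0 b.
Proof.
  intros Hr H.
  assert (Hx : xapp (sw p0) b).
  { apply (appr_x _ _ r Hr). intros a' Ha'. destruct (H a' Ha') as [p [Hp Hpy]].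
    exists (sw p). split; [apply cl_sw; auto|]. rewrite xc_sw. auto. }
  intros M eps He. destruct (Hx M eps He) as [o [Ho [Hn Hd]]].
  exists (sw o). split; [apply orbit_sw'; auto|]. rewrite yc_sw. auto.
Qed.

Definition rho (p : pt) : pt := tauY_inv (tauX p).

Lemma rho_orbit p0 q : orbit p0 q -> orbit p0 (rho q).
Proof. intro H. unfold rho. apply orbit_Yi, orbit_X, H. Qed.

Lemma xc_rho q : xc (rho q) = yc q.
Proof. destruct q as [[x y] z]. unfold rho, xc, yc. simpl. ring. Qed.
Lemma yc_rho q : yc (rho q) = zc q.
Proof. destruct q as [[x y] z]. unfold rho, yc, zc. simpl. ring. Qed.

Lemma orb_avoid p0 : ~ finite_set (orbit p0) -> forall L, exists o, orbit p0 o /\ ~ In (xc o) L.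
Proof.
  intros Hinf L. apply NNPP. intro Hno. apply Hinf.
  assert (Hall : forall o, orbit p0 o -> In (xc o) L).
  { intros o Ho. apply NNPP. intro Hn. apply Hno. exists o. auto. }
  exists (list_prod (list_prod L L) L).
  intros [[x y] z] Ho.
  apply in_prod; [apply in_prod|].
  - apply (Hall _ Ho).
  - pose proof (Hall _ (rho_orbit _ _ Ho)). rewrite xc_rho in H. exact H.
  - pose proof (Hall _ (rho_orbit _ _ (rho_orbit _ _ Ho))). rewrite xc_rho, yc_rho in H. exact H.
Qed.


Lemma sqr_abs_lt u s : 0 <= s -> u*u < s*s -> Rabs u < s.
Proof.
  intros Hs H. destruct (Rlt_or_le (Rabs u) s) as [|Hge]; auto.
  assert (u*u = Rabs u * Rabs u) by (unfold Rabs; destruct Rcase_abs; ring). nra.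
Qed.

Lemma abs_lt_sqr u s : Rabs u < s -> u*u < s*s.
Proof.
  intros H. assert (u*u = Rabs u * Rabs u) by (unfold Rabs; destruct Rcase_abs; ring).
  pose proof (Rabs_pos u). nra.
Qed.

Lemma orb_y k p0 : -2 < k < 2 -> E_k k p0 -> ~ finite_set (orbit p0) -> forall M,
  exists o, orbit p0 o /\ ~ In (yc o) (Pl M) /\ Rabs (yc o) <= sqrt (k+2) / 2.
Proof.
  intros Hk H0 Hinf M.
  set (L := Pl M). set (n := length L).
  set (s := sqrt (k+2)).
  assert (Hs : s * s = k+2) by (apply sqrt_sqrt; lra).
  assert (Hs0 : 0 < s) by (apply sqrt_lt_R0; lra).
  set (r0 := s/2).
  set (B := Bk k). assert (HB : 0 <= B) by apply sqrt_pos.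
  set (K := 2 * 2 ^ S n).
  assert (HK : 0 < K) by (unfold K; pose proof (pow_lt 2 (S n)); lra).
  set (M1 := S (Z.to_nat (up (PI * K * (1 + B/r0))))).
  assert (HM1 : PI * K * (1 + B/r0) < INR M1) by apply INR_up_bound.
  assert (HM11 : (1 <= M1)%nat) by (unfold M1; lia).
  assert (HM1r : 0 < INR M1) by (apply lt_0_INR; lia).
  pose proof PI_RGT_0 as Hpi.
  destruct (orb_avoid p0 Hinf (Pl M1 ++ s :: -s :: nil)) as [o [Ho Hn]].
  pose proof (orbit_Ek k p0 o ltac:(lra) H0 Ho) as HoE.
  destruct o as [[a y] z]. unfold xc in Hn; cbn [fst snd] in Hn.
  assert (Hn1 : ~ In a (Pl M1)) by (intro; apply Hn; apply in_or_app; auto).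
  assert (Has : a <> s) by (intro; apply Hn; apply in_or_app; right; left; auto).
  assert (Has' : a <> -s) by (intro; apply Hn; apply in_or_app; right; right; left; auto).
  destruct (Ek_sq _ _ _ _ HoE) as [Ha2 _].
  assert (Ha : a * a < k + 2).
  { destruct (Rle_lt_or_eq_dec _ _ Ha2) as [|He]; auto.
    exfalso. assert ((a - s) * (a + s) = 0) by (rewrite <- Hs in He; nra).
    apply Rmult_integral in H. destruct H; [apply Has|apply Has']; lra. }
  assert (Hab : -2 <= a <= 2) by nra.
  destruct (Gx_rep k a y z Hk HoE) as [phi0 Eq0]. rewrite Eq0 in Ho.
  set (R := Rk k a).
  assert (HR : 0 < R) by (apply Rk_pos; auto).
  assert (HRB : R <= B) by (apply Rk_le_Bk; lra).
  set (R2 := Rmin R r0).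
  assert (HR2 : 0 < R2) by (apply Rmin_pos; unfold r0; lra).
  assert (HR2R : R2 <= R) by apply Rmin_l.
  assert (HR2r : R2 <= r0) by apply Rmin_r.
  destruct (avoid L (R2/4) (3*R2/4) ltac:(lra)) as [c [H1 [H2 H3]]].
  fold n in H1, H2, H3.
  assert (Emu : (3 * R2 / 4 - R2 / 4) / 2 ^ S n = R2 / K).
  { unfold K. field. apply pow_nonzero. lra. }
  rewrite Emu in H1, H2, H3.
  assert (Hmu : 0 < R2 / K) by (apply Rdiv_lt_0_compat; lra).
  assert (Hc : -1 <= c / R <= 1).
  { split; apply (Rmult_le_reg_r R); auto; unfold Rdiv; rewrite Rmult_assoc, Rinv_l by lra; lra. }
  destruct (rot_dense k a p0 M1 phi0 (acos (c/R)) Hab HM11 Hn1 Ho) as [psi [Hpsi [Hb1 _]]].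
  rewrite cos_acos in Hb1 by auto.
  exists (Gx k a psi). split; auto.
  unfold yc, Gx. cbn [fst snd]. fold R.
  assert (Hkey : R * PI * K < R2 * INR M1).
  { unfold R2, Rmin. destruct (Rle_dec R r0).
    - assert (PI * K < INR M1).
      { eapply Rle_lt_trans; [|apply HM1].
        assert (0 <= B / r0) by (unfold Rdiv; apply Rmult_le_pos; [lra|]; apply Rlt_le, Rinv_0_lt_compat; unfold r0; lra).
        assert (0 <= PI * K) by nra. nra. }
      nra.
    - assert (B * PI * K < r0 * INR M1).
      { assert (Hr0 : 0 < r0) by (unfold r0; lra).
        replace (B * PI * K) with (r0 * (PI * K * (B / r0))) by (field; lra).
        apply Rmult_lt_compat_l; auto.
        eapply Rle_lt_trans; [|apply HM1]. nra. }
      assert (R * PI * K <= B * PI * K) by (apply Rmult_le_compat_r; [lra|]; apply Rmult_le_compat_r; lra).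
      lra. }
  assert (Hd : Rabs (R * cos psi - c) < R2 / K).
  { replace (R * cos psi - c) with (R * (cos psi - c / R)) by (field; lra).
    rewrite Rabs_mult, (Rabs_right R) by lra.
    apply Rle_lt_trans with (R * (PI / INR M1)).
    - apply Rmult_le_compat_l; lra.
    - apply (Rmult_lt_reg_r (K * INR M1)); [nra|].
      replace (R * (PI / INR M1) * (K * INR M1)) with (R * PI * K) by (field; lra).
      replace (R2 / K * (K * INR M1)) with (R2 * INR M1) by (field; lra). lra. }
  split.
  - intro Hin. specialize (H3 _ Hin). lra.
  - apply abs_lt_b in Hd. apply b_abs_le. change (sqrt (k+2) / 2) with r0. lra.
Qed.


Lemma sup_app p0 r0 : 0 <= r0 ->
  (forall M, exists o, orbit p0 o /\ ~ In (yc o) (Pl M) /\ Rabs (yc o) <= r0) ->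
  exists b, Rabs b <= r0 /\ yapp p0 b.
Proof.
  intros Hr0 Hex.
  set (Aset := fun (M : nat) (v : R) => exists o, orbit p0 o /\ ~ In (yc o) (Pl M) /\ Rabs (yc o) <= r0 /\ yc o = v).
  assert (Hbd : forall M, bound (Aset M)).
  { intro M. exists r0. intros v [o [_ [_ [Hv <-]]]]. apply abs_le_b in Hv. lra. }
  assert (Hne : forall M, exists v, Aset M v).
  { intro M. destruct (Hex M) as [o [Ho [Hn Hv]]]. exists (yc o). exists o. auto. }
  set (s := fun M => proj1_sig (completeness (Aset M) (Hbd M) (Hne M))).
  assert (Hs : forall M, is_lub (Aset M) (s M)).
  { intro M. unfold s. destruct completeness. auto. }
  assert (Hslo : forall M, -r0 <= s M).
  { intro M. destruct (Hne M) as [v Hv]. pose proof (proj1 (Hs M) v Hv).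
    destruct Hv as [o [_ [_ [Hv <-]]]]. apply abs_le_b in Hv. lra. }
  assert (Hshi : forall M, s M <= r0).
  { intro M. apply (proj2 (Hs M)). intros v [o [_ [_ [Hv <-]]]]. apply abs_le_b in Hv. lra. }
  assert (Hmono : forall M M', (M <= M')%nat -> s M' <= s M).
  { intros M M' HMM. apply (proj2 (Hs M')). intros v [o [Ho [Hn [Hv Hov]]]].
    apply (proj1 (Hs M)). exists o. repeat split; auto. intro Hin. apply Hn. eapply Pl_mono; eauto. }
  set (T := fun v => exists M, v = - s M).
  assert (HTb : bound T) by (exists r0; intros v [M ->]; specialize (Hslo M); lra).
  assert (HTn : exists v, T v) by (exists (- s 0%nat); exists 0%nat; auto).
  destruct (completeness T HTb HTn) as [b' Hb'].
  assert (Hlow : forall M, - s M <= b') by (intro M; apply (proj1 Hb'); exists M; auto).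
  assert (Hup : b' <= r0) by (apply (proj2 Hb'); intros v [M ->]; specialize (Hslo M); lra).
  assert (Happ : forall eps, eps > 0 -> exists M, s M < - b' + eps).
  { intros eps He. apply NNPP. intro Hno.
    assert (b' <= b' - eps).
    { apply (proj2 Hb'). intros v [M ->]. destruct (Rlt_or_le (s M) (- b' + eps)) as [Hl|Hl].
      - exfalso. apply Hno. exists M. auto.
      - lra. }
    lra. }
  exists (- b'). split.
  { specialize (Hlow 0%nat). specialize (Hshi 0%nat). apply b_abs_le. lra. }
  intros M eps He.
  destruct (Happ (eps/2) ltac:(lra)) as [M0 HM0].
  set (M' := Nat.max M M0).
  assert (H1 : s M' <= s M0) by (apply Hmono; unfold M'; lia).
  specialize (Hlow M').
  assert (Hv : exists v, Aset M' v /\ s M' - eps/2 < v).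
  { apply NNPP. intro Hno.
    assert (s M' <= s M' - eps/2).
    { apply (proj2 (Hs M')). intros v Hv. destruct (Rlt_or_le (s M' - eps/2) v) as [Hl|Hl]; auto.
      exfalso. apply Hno. exists v. auto. }
    lra. }
  destruct Hv as [v [Hav Hlt]].
  pose proof (proj1 (Hs M') v Hav) as Hle.
  destruct Hav as [o [Ho [Hn [_ Hov]]]].
  exists o. split; auto. split.
  - intro Hin. apply Hn. eapply Pl_mono; [|exact Hin]. unfold M'. lia.
  - rewrite Hov. apply b_abs_lt. lra.
Qed.

Theorem proposition4p2 (k : R) (p0 : pt) :
  -2 < k < 2 -> E_k k p0 ->
  ~ finite_set (orbit p0) ->
  dense_in (orbit p0) (E_k k).
Proof.
  intros Hk H0 Hinf.
  set (s := sqrt (k+2)).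
  assert (Hs : s * s = k+2) by (apply sqrt_sqrt; lra).
  assert (Hs0 : 0 < s) by (apply sqrt_lt_R0; lra).
  assert (Hs2 : s < 2) by nra.
  set (r0 := s/2).
  destruct (sup_app p0 r0 ltac:(unfold r0; lra) (orb_y k p0 Hk H0 Hinf)) as [b [Hb Hyb]].
  assert (Hbb : b * b <= r0 * r0) by (pose proof (abs_lt_sqr b (r0 + 0)); apply abs_le_b in Hb; nra).
  assert (Hbk : b * b < k + 2) by (unfold r0 in Hbb; nra).
  pose proof (Prop_y k p0 b Hk H0 Hbk Hyb) as HLb.
  assert (Hx0 : xapp p0 0).
  { apply (appr_x p0 0 r0 ltac:(unfold r0; lra)). intros a' Ha'.
    rewrite Rminus_0_r in Ha'.
    assert (Ha2 : a' * a' < r0 * r0) by (apply abs_lt_sqr; auto).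
    set (D := a'*a'*(b*b) - 4*(a'*a' + b*b - 2 - k)).
    assert (HD : 0 <= D) by (unfold D, r0 in *; nra).
    set (z := (a'*b + sqrt D)/2).
    assert (HE : E_k k (a', b, z)).
    { apply Ek_intro; try lra.
      - unfold kappa. unfold z. pose proof (sqrt_sqrt D HD).
        replace (a' * a' + b * b + (a' * b + sqrt D) / 2 * ((a' * b + sqrt D) / 2) - a' * b * ((a' * b + sqrt D) / 2) - 2)
          with (a' * a' + b * b - 2 + (sqrt D * sqrt D - a'*a'*(b*b))/4) by field.
        rewrite H. unfold D. field.
      - unfold r0 in *. apply abs_lt_b in Ha'. lra.
      - unfold r0 in *. apply abs_le_b in Hb. lra. }
    exists (a', b, z). split; [|reflexivity].
    apply HLb; auto. }
  pose proof (Prop_x k p0 0 Hk H0 ltac:(lra) Hx0) as HL0.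
  assert (HLy : forall b', b' * b' < k+2 -> forall t, E_k k t -> yc t = b' -> cl p0 t).
  { intros b' Hb' t Ht Hyt. apply (Prop_y k p0 b' Hk H0 Hb'); auto.
    assert (Hab : Rabs b' < s) by (apply sqr_abs_lt; lra).
    apply (appr_y p0 b' (s - Rabs b') ltac:(lra)). intros b'' Hb''.
    assert (Hb3 : Rabs b'' < s).
    { pose proof (Rabs_triang (b'' - b') b'). replace (b'' - b' + b') with b'' in H by ring. lra. }
    assert (Hb4 : b'' * b'' < k + 2) by (rewrite <- Hs; apply abs_lt_sqr; auto).
    set (z := sqrt (k + 2 - b''*b'')).
    assert (HE : E_k k (0, b'', z)).
    { apply Ek_intro; try lra.
      - unfold kappa, z. pose proof (sqrt_sqrt (k + 2 - b''*b'') ltac:(lra)). nra.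
      - apply abs_lt_b in Hb3. lra. }
    exists (0, b'', z). split; [|reflexivity].
    apply HL0; auto. }
  intros t Ht eps He.
  destruct t as [[x y] z].
  assert (Hcl : cl p0 (x, y, z)).
  { destruct (Req_dec x 0) as [Hx|Hx].
    - apply HL0; auto.
    - apply (HLy y); auto.
      destruct (Ek_sq _ _ _ _ Ht) as [_ [Hy2 _]].
      destruct (Rle_lt_or_eq_dec _ _ Hy2) as [|Hyeq]; auto.
      exfalso. apply Hx.
      destruct Ht as [[[Hxb [Hyb' Hzb]] _] Hka]. unfold kappa in Hka.
      assert (Hy4 : 0 < 4 - y*y) by lra.
      assert (Hq : (2*x - y*z)*(2*x - y*z) + z*z*(4 - y*y) = 0).
      { replace ((2*x - y*z)*(2*x - y*z) + z*z*(4 - y*y)) with (4*((x*x+y*y+z*z-x*y*z-2) - (y*y - 2))) by ring.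
        rewrite Hka, Hyeq. ring. }
      pose proof (Rle_0_sqr z) as Hz2. pose proof (Rle_0_sqr (2*x - y*z)) as Hq2. unfold Rsqr in *.
      assert (0 <= z*z*(4 - y*y)) by (apply Rmult_le_pos; lra).
      assert (Hzz : z*z*(4 - y*y) = 0) by lra.
      apply Rmult_integral in Hzz. destruct Hzz as [Hzz|Hzz]; [|lra].
      assert (z = 0) by (apply Rmult_integral in Hzz; destruct Hzz; auto). subst z.
      assert (Hxx : (2*x)*(2*x) = 0) by (rewrite <- Hq; ring).
      apply Rmult_integral in Hxx. lra. }
  destruct (Hcl eps He) as [o [Ho Hd]]. exists o. auto.
Qed.
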